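(* There is a universal constant $A>0$ such that the following holds. Let $N\ge6$ be even and consider the balanced Bernoulli–Laplace chain with $N_1=N_2=N_w=N_b=N/2$. For every $c>0$ and every integer $$m\ \ge\ \tfrac14 N\log N+\Big(\tfrac c2-\tfrac{\log 2}{8}\Big)N,$$ we have $$E_\pi\big[\|\rho_m(j;\cdot)-\pi\|_V\big]:=\sum_{j=0}^{N/2}\pi_j\,\|\rho_m(j;\cdot)-\pi\|_V\ \le\ A\,e^{-2c}.$$
   Context: Balanced Bernoulli–Laplace model: $N$ even, two urns each containing $N/2$ balls, $N/2$ white and $N/2$ black balls in total; the state $i\in\{0,\dots,N/2\}$ is the number of white balls in urn 1. At each step one ball is drawn uniformly from each urn and the two are swapped, giving transition probabilities $p_i=\frac{4(N/2-i)^2}{N^2}$ (from $i$ to $i+1$), $q_i=\frac{4i^2}{N^2}$ (from $i$ to $i-1$), $r_i=1-p_i-q_i$ (stay). $T$ is the transition matrix with $T_{ij}$ the probability to move from $j$ to $i$, and $\rho_m(j;i)=(T^m)_{ij}$ is the distribution at time $m$ started from $j$. The stationary distribution is $\pi_i=\binom{N/2}{i}^2/\binom{N}{N/2}$. $\|\rho-\pi\|_V=\frac12\sum_i|\rho_i-\pi_i|$ is total variation distance; $\log$ is the natural logarithm. *)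

(* Defs.v *)
From Stdlib Require Import Reals Lra Lia Arith.
Open Scope R_scope.

Definition half (N : nat) : nat := (N / 2)%nat.

Definition BL_p (N i : nat) : R :=
  4 * (INR (half N) - INR i) ^ 2 / (INR N) ^ 2.
Definition BL_q (N i : nat) : R := 4 * (INR i) ^ 2 / (INR N) ^ 2.
Definition BL_r (N i : nat) : R := 1 - BL_p N i - BL_q N i.

(* T_{ij} = probability to move from j to i (i, j in 0..N/2). *)
Definition BL_T (N i j : nat) : R :=
  if Nat.eqb i (S j) then BL_p N j
  else if Nat.eqb (S i) j then BL_q N j
  else if Nat.eqb i j then BL_r N j
  else 0.

Fixpoint BL_rho (N m j i : nat) : R :=
  match m with
  | O => if Nat.eqb i j then 1 else 0
  | S m' => sum_f_R0 (fun k => BL_T N i k * BL_rho N m' j k) (half N)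
  end.

Definition BL_pi (N i : nat) : R := (C (half N) i) ^ 2 / C N (half N).

Definition BL_TV (N m j : nat) : R :=
  / 2 * sum_f_R0 (fun i => Rabs (BL_rho N m j i - BL_pi N i)) (half N).

Definition BL_avgTV (N m : nat) : R :=
  sum_f_R0 (fun j => BL_pi N j * BL_TV N m j) (half N).

(* Main.v *)
Require Import Defs.
From Stdlib Require Import Reals Lra Lia Arith.
Module V.
From mathcomp Require Import ssreflect ssrfun ssrbool eqtype ssrnat seq fintype bigop binomial.
Local Open Scope nat_scope.
Lemma fact_eq n : fact n = n`!.
Proof. elim: n => [//|n IH]. by rewrite factS -IH. Qed.

Lemma C_bin a k : k <= a -> C a k = INR 'C(a, k).
Proof.
move=> hk. rewrite /C.
have H := bin_fact hk.
rewrite !fact_eq -H !mult_INR.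
have h1 : INR k`! <> 0%R by apply: not_0_INR; apply/eqP; rewrite -lt0n fact_gt0.
have h2 : INR (a - k)`! <> 0%R by apply: not_0_INR; apply/eqP; rewrite -lt0n fact_gt0.
move: h1 h2. set u := INR k`!. set v := INR (a-k)`!. move=> h1 h2. unfold Rdiv. rewrite Rinv_mult. field. split; auto.
Qed.

Lemma INR_big (F : nat -> nat) k :
  INR (\sum_(i < k.+1) F i) = sum_f_R0 (fun i => INR (F i)) k.
Proof.
elim: k => [|k IH]; first by rewrite big_ord_recr big_ord0.
by rewrite big_ord_recr /= plus_INR IH.
Qed.

Lemma vdm n : sum_f_R0 (fun i => (C n i)^2)%R n = C (n + n) n.
Proof.
rewrite C_bin ?leq_addr // -(Vandermonde n n n) (INR_big (fun j => muln (binomial n j) (binomial n (n - j)))).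
apply: Stdlib.Reals.PartSum.sum_eq => i hi /=.
have hi' : i <= n by apply/leP.
rewrite bin_sub // C_bin // mult_INR /=. ring.
Qed.
End V.
Global Set Bullet Behavior "Strict Subproofs".
Open Scope R_scope.
Lemma vdm2 n : sum_f_R0 (fun i => (C n i)^2) n = C (n + n) n.
Proof. exact (V.vdm n). Qed.

Fixpoint S1 (f : nat -> R) (n : nat) : R :=
  match n with O => 0 | S k => S1 f k + f (S k) end.

Lemma S1_ext f g n : (forall k, (1 <= k <= n)%nat -> f k = g k) -> S1 f n = S1 g n.
Proof.
  induction n; intros H; simpl; auto.
  rewrite IHn, H; auto; intros; try lia; apply H; lia.
Qed.

Lemma S1_le f g n : (forall k, (1 <= k <= n)%nat -> f k <= g k) -> S1 f n <= S1 g n.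
Proof.
  induction n; intros H; simpl; try lra.
  apply Rplus_le_compat; [apply IHn; intros; apply H; lia| apply H; lia].
Qed.

Lemma S1_plus f g n : S1 (fun k => f k + g k) n = S1 f n + S1 g n.
Proof. induction n; simpl; try rewrite IHn; ring. Qed.

Lemma S1_scal c f n : S1 (fun k => f k * c) n = S1 f n * c.
Proof. induction n; simpl; try rewrite IHn; ring. Qed.

Lemma S1_const c n : S1 (fun _ => c) n = c * INR n.
Proof. induction n; simpl S1; try rewrite IHn; rewrite ?S_INR; simpl; ring. Qed.

Lemma shiftA a f n : S1 (fun k => a k * f (S k)) n + a 0%nat * f 1%nat
   = S1 (fun l => a (pred l) * f l) n + a n * f (S n).
Proof. induction n; simpl; [ring|]. simpl in IHn. lra. Qed.

Lemma shiftC c f n : S1 (fun k => c k * f (pred k)) n + c (S n) * f n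
   = S1 (fun l => c (S l) * f l) n + c 1%nat * f 0%nat.
Proof. induction n; simpl; [ring|]. simpl in IHn. lra. Qed.

Lemma regroup n a b c f : a 0%nat = 0 -> c (S n) = 0 -> f 0%nat = 0 -> f (S n) = 0 ->
  S1 (fun k => a k * f (S k) + b k * f k + c k * f (pred k)) n
  = S1 (fun l => f l * (a (pred l) + b l + c (S l))) n.
Proof.
  intros Ha Hc Hf0 Hf1.
  rewrite !S1_plus.
  assert (E1 := shiftA a f n). assert (E2 := shiftC c f n).
  rewrite Ha, Hf1 in E1. rewrite Hc, Hf0 in E2.
  assert (E3 : S1 (fun l => f l * (a (pred l) + b l + c (S l))) n =
     S1 (fun l => a (pred l) * f l) n + S1 (fun l => b l * f l) n + S1 (fun l => c (S l) * f l) n).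
  { rewrite <- !S1_plus. apply S1_ext. intros; ring. }
  rewrite E3. lra.
Qed.

Lemma sumf_S1 u n : sum_f_R0 u n = u 0%nat + S1 u n.
Proof. induction n; simpl; [ring|]. rewrite IHn. ring. Qed.

Lemma sumf_S1S u n : sum_f_R0 (fun i => u (S i)) n = S1 u (S n).
Proof. induction n; simpl; [ring|]. simpl in IHn. rewrite IHn. ring. Qed.

Fixpoint tl (x : nat -> R) (k len : nat) : R :=
  match len with O => 0 | S l => x k + tl x (S k) l end.
Definition tail (n : nat) (x : nat -> R) (k : nat) := tl x k (S n - k).

Lemma tail_S n x k : (k <= n)%nat -> tail n x k = x k + tail n x (S k).
Proof.
  intros H; unfold tail. replace (S n - k)%nat with (S (n - k)) by lia. simpl. reflexivity.
Qed.

Lemma tail_out n x k : (n < k)%nat -> tail n x k = 0.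
Proof. intros H; unfold tail. replace (S n - k)%nat with 0%nat by lia. reflexivity. Qed.

Lemma tl_last x k len : tl x k (S len) = tl x k len + x (k + len)%nat.
Proof.
  revert k; induction len; intros k; simpl.
  - rewrite Nat.add_0_r; ring.
  - simpl in IHlen. rewrite IHlen. replace (S k + len)%nat with (k + S len)%nat by lia. ring.
Qed.

Lemma tail0 n x : tail n x 0 = sum_f_R0 x n.
Proof.
  unfold tail. replace (S n - 0)%nat with (S n) by lia.
  induction n. simpl; ring.
  rewrite tl_last, IHn. simpl. reflexivity.
Qed.

Lemma tl_minus x y k len : tl (fun i => x i - y i) k len = tl x k len - tl y k len.
Proof. revert k; induction len; intros k; simpl; [ring|]. rewrite IHlen; ring. Qed.

Lemma tail_minus n x y k : tail n (fun i => x i - y i) k = tail n x k - tail n y k.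
Proof. apply tl_minus. Qed.

Lemma tl_nonneg x k len : (forall i, 0 <= x i) -> 0 <= tl x k len.
Proof. revert k; induction len; intros k H; simpl; [lra|]. specialize (IHlen (S k) H). specialize (H k). lra. Qed.

Lemma tail_le0 n x : (forall i, 0 <= x i) -> forall k, tail n x k <= tail n x 0.
Proof.
  intros H k. induction k. lra.
  destruct (le_lt_dec (S k) n).
  - rewrite tail_S in IHk by lia. specialize (H k). lra.
  - rewrite tail_out by lia. rewrite tail0. unfold tail in IHk. 
    assert (0 <= tail n x 0) by (apply tl_nonneg; auto). rewrite tail0 in H0. lra.
Qed.
Definition IsStep (n : nat) (p q : nat -> R) (x y : nat -> R) :=
  forall i, (i <= n)%nat -> y i = (if (1 <=? i)%nat then p (pred i) * x (pred i) else 0)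
     + (1 - p i - q i) * x i + (if (i <? n)%nat then q (S i) * x (S i) else 0).

Ltac bdestr := repeat match goal with
  | |- context [Nat.eqb ?a ?b] => destruct (Nat.eqb_spec a b)
  | |- context [Nat.leb ?a ?b] => destruct (Nat.leb_spec a b)
  | |- context [Nat.ltb ?a ?b] => destruct (Nat.ltb_spec a b)
  end; cbn [andb] in *.

Lemma sumT (P Q Rr x : nat -> R) i M :
  sum_f_R0 (fun k => (if Nat.eqb i (S k) then P k else if Nat.eqb (S i) k then Q k
       else if Nat.eqb i k then Rr k else 0) * x k) M =
  (if andb (1 <=? i)%nat (i <=? S M)%nat then P (pred i) * x (pred i) else 0)
  + (if (i <=? M)%nat then Rr i * x i else 0)
  + (if (S i <=? M)%nat then Q (S i) * x (S i) else 0).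
Proof.
  induction M.
  - simpl. destruct i as [|[|i]]; simpl; ring.
  - rewrite tech5, IHM. bdestr; try (exfalso; lia); subst; simpl; try ring;
    try (replace i with (S M) by lia; ring); try (replace i with M by lia; ring);
    try (replace i with (S (S M)) by lia; simpl; ring).
Qed.
Lemma IsStep_minus n p q x y x' y' : IsStep n p q x y -> IsStep n p q x' y' ->
  IsStep n p q (fun i => x i - x' i) (fun i => y i - y' i).
Proof.
  intros H H' i Hi. rewrite H, H' by auto. bdestr; ring.
Qed.

Lemma tail_aux n p q x y : p n = 0 -> IsStep n p q x y ->
  forall t k, (k + t = n)%nat -> (1 <= k)%nat ->
  tail n y k = tail n x (S k) + (1 - q k) * x k + p (pred k) * x (pred k).
Proof.
  intros Hp Hs t. induction t; intros k Hk H1.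
  - rewrite Nat.add_0_r in Hk. subst k.
    rewrite tail_S, tail_out, (tail_out n x (S n)) by lia.
    rewrite Hs by lia. rewrite Hp. bdestr; try lia. ring.
  - rewrite tail_S by lia. rewrite (IHt (S k)) by lia.
    rewrite Hs by lia. rewrite (tail_S n x (S k)) by lia. simpl pred.
    bdestr; try lia. ring.
Qed.

Lemma tail_rec n p q x y : p n = 0 -> IsStep n p q x y ->
  forall k, (1 <= k <= n)%nat ->
  tail n y k = q k * tail n x (S k) + (1 - q k - p (pred k)) * tail n x k
     + p (pred k) * tail n x (pred k).
Proof.
  intros Hp Hs k Hk.
  rewrite (tail_aux n p q x y Hp Hs (n - k) k) by lia.
  rewrite (tail_S n x k) by lia.
  rewrite (tail_S n x (pred k)) by lia.
  replace (S (pred k)) with k by lia.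
  rewrite (tail_S n x k) by lia. ring.
Qed.

Lemma tail_rec0 n p q x y : p n = 0 -> q 0%nat = 0 -> (1 <= n)%nat -> IsStep n p q x y ->
  tail n y 0 = tail n x 0.
Proof.
  intros Hp Hq Hn Hs.
  rewrite tail_S by lia. rewrite (tail_aux n p q x y Hp Hs (n - 1) 1) by lia.
  rewrite Hs by lia. rewrite (tail_S n x 0), (tail_S n x 1) by lia. simpl pred.
  rewrite Hq. bdestr; try lia. ring.
Qed.

Definition inr1 (n k : nat) : bool := andb (1 <=? k)%nat (k <=? n)%nat.

Definition Lop (n : nat) (a b c : nat -> R) (f : nat -> R) (k : nat) : R :=
  if inr1 n k then a k * f (S k) + b k * f k + c k * f (pred k) else 0.

Definition Phi (n : nat) (f : nat -> R) := S1 (fun k => Rabs (f k)) n.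

Lemma Lop_ext n a b c f g : (forall k, f k = g k) -> forall k, Lop n a b c f k = Lop n a b c g k.
Proof. intros H k; unfold Lop; rewrite !H; reflexivity. Qed.

Lemma Lop_0 n a b c f : Lop n a b c f 0 = 0.
Proof. reflexivity. Qed.
Lemma Lop_Sn n a b c f : Lop n a b c f (S n) = 0.
Proof. unfold Lop, inr1. bdestr; try lia; reflexivity. Qed.

Lemma Lop_sum n a b c g f : a 0%nat = 0 -> c (S n) = 0 ->
  (forall l, (1 <= l <= n)%nat -> a (pred l) + b l + c (S l) = g) ->
  f 0%nat = 0 -> f (S n) = 0 -> S1 (Lop n a b c f) n = g * S1 f n.
Proof.
  intros Ha Hc H2 Hf0 Hf1.
  transitivity (S1 (fun k => a k * f (S k) + b k * f k + c k * f (pred k)) n).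
  { apply S1_ext; intros k Hk; unfold Lop, inr1; bdestr; try lia; reflexivity. }
  rewrite regroup by auto. rewrite Rmult_comm, <- S1_scal. apply S1_ext.
  intros; rewrite H2; auto.
Qed.

Lemma Lop_one n a b c f : a 0%nat = 0 -> c (S n) = 0 ->
  (forall k, 0 <= a k) -> (forall k, 0 <= c k) ->
  (forall l, (1 <= l <= n)%nat -> a (pred l) + Rabs (b l) + c (S l) <= 1) ->
  f 0%nat = 0 -> f (S n) = 0 -> Phi n (Lop n a b c f) <= Phi n f.
Proof.
  intros Ha Hc Ha0 Hc0 H4 Hf0 Hf1. unfold Phi.
  apply Rle_trans with (S1 (fun k => a k * Rabs (f (S k)) + Rabs (b k) * Rabs (f k) + c k * Rabs (f (pred k))) n).
  { apply S1_le; intros k Hk; unfold Lop, inr1; bdestr; try lia.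
    eapply Rle_trans; [apply Rabs_triang|]. apply Rplus_le_compat.
    eapply Rle_trans; [apply Rabs_triang|]. apply Rplus_le_compat.
    all: rewrite Rabs_mult; try rewrite (Rabs_pos_eq (a k)); try rewrite (Rabs_pos_eq (c k)); auto; lra. }
  rewrite (regroup n a (fun k => Rabs (b k)) c (fun k => Rabs (f k))) by (auto; rewrite ?Hf0, ?Hf1, Rabs_R0; auto).
  apply S1_le. intros l Hl. specialize (H4 l Hl). assert (0 <= Rabs (f l)) by apply Rabs_pos. nra.
Qed.
Definition E5 (a b c f : nat -> R) (k : nat) : R :=
  a k * a (S k) * f (S (S k)) + a k * (b (S k) + b k) * f (S k)
  + (a k * c (S k) + b k * b k + c k * a (pred k)) * f k
  + c k * (b k + b (pred k)) * f (pred k) + c k * c (pred k) * f (pred (pred k)).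

Lemma Lop2_expand n a b c f : a n = 0 -> c 1%nat = 0 ->
  forall k, (1 <= k <= n)%nat -> Lop n a b c (Lop n a b c f) k = E5 a b c f k.
Proof.
  intros Han Hc1 k Hk. unfold E5.
  assert (A1 : a k * Lop n a b c f (S k) = a k * (a (S k) * f (S (S k)) + b (S k) * f (S k) + c (S k) * f k)).
  { destruct (Nat.eq_dec k n). subst; rewrite Han; ring.
    unfold Lop, inr1; bdestr; try lia. reflexivity. }
  assert (A2 : c k * Lop n a b c f (pred k) = c k * (a (pred k) * f k + b (pred k) * f (pred k) + c (pred k) * f (pred (pred k)))).
  { destruct (Nat.eq_dec k 1). subst; rewrite Hc1; ring.
    unfold Lop, inr1; bdestr; try lia. replace (S (pred k)) with k by lia. reflexivity. }
  assert (A3 : Lop n a b c f k = a k * f (S k) + b k * f k + c k * f (pred k)).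
  { unfold Lop, inr1; bdestr; try lia. reflexivity. }
  unfold Lop at 1; unfold inr1; bdestr; try lia.
  rewrite A1, A2, A3. ring.
Qed.

Lemma abs5 c1 c2 c3 c4 c5 u1 u2 u3 u4 u5 : 0 <= c1 -> 0 <= c2 -> 0 <= c3 -> 0 <= c4 -> 0 <= c5 ->
  Rabs (c1 * u1 + c2 * u2 + c3 * u3 + c4 * u4 + c5 * u5)
  <= c1 * Rabs u1 + c2 * Rabs u2 + c3 * Rabs u3 + c4 * Rabs u4 + c5 * Rabs u5.
Proof.
  intros.
  repeat (eapply Rle_trans; [apply Rabs_triang|]; apply Rplus_le_compat);
  rewrite Rabs_mult, Rabs_pos_eq; auto; lra.
Qed.

Lemma Lop_two n a b c g f : a 0%nat = 0 -> c (S n) = 0 -> a n = 0 -> c 1%nat = 0 ->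
  (forall k, 0 <= a k) -> (forall k, 0 <= c k) ->
  (forall l, (1 <= l <= n)%nat -> a (pred l) + b l + c (S l) = g) ->
  (forall k, (1 <= k <= n)%nat -> 0 <= a k * (b (S k) + b k)) ->
  (forall k, (1 <= k <= n)%nat -> 0 <= c k * (b k + b (pred k))) ->
  f 0%nat = 0 -> f (S n) = 0 ->
  Phi n (Lop n a b c (Lop n a b c f)) <= g * g * Phi n f.
Proof.
  intros Ha0 HcS Han Hc1 Hap Hcp H2 H5a H5c Hf0 Hf1.
  set (F := fun k => Rabs (f k)).
  apply Rle_trans with (S1 (Lop n a b c (Lop n a b c F)) n).
  { apply S1_le. intros k Hk. rewrite !Lop2_expand by auto. unfold E5, F.
    apply abs5; auto.
    - apply Rmult_le_pos; auto.
    - pose proof (Hap k); pose proof (Hcp k); pose proof (Hap (pred k)); pose proof (Hcp (S k)). nra.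
    - apply Rmult_le_pos; auto. }
  rewrite (Lop_sum n a b c g) by (auto; apply Lop_Sn).
  rewrite (Lop_sum n a b c g) by (unfold F; auto; rewrite ?Hf0, ?Hf1; apply Rabs_R0).
  unfold Phi, F. ring_simplify. lra.
Qed.
Lemma p_eq N n i : INR N = 2 * INR n -> half N = n -> 0 < INR n ->
  BL_p N i = (INR n - INR i)^2 / (INR n)^2.
Proof. intros HN Hh Hn. unfold BL_p. rewrite Hh, HN. field. lra. Qed.

Lemma q_eq N n i : INR N = 2 * INR n -> 0 < INR n ->
  BL_q N i = (INR i)^2 / (INR n)^2.
Proof. intros HN Hn. unfold BL_q. rewrite HN. field. lra. Qed.

Lemma INR_pred k : (1 <= k)%nat -> INR (pred k) = INR k - 1.
Proof. intros H. destruct k. lia. simpl pred. rewrite S_INR. ring. Qed.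

Definition ca N n k := if andb (1 <=? k)%nat (k <? n)%nat then BL_q N k else 0.
Definition cb N k := 1 - BL_q N k - BL_p N (pred k).
Definition cc N n k := if andb (2 <=? k)%nat (k <=? n)%nat then BL_p N (pred k) else 0.

Ltac pq HN Hh Hn := repeat (rewrite (p_eq _ _ _ HN Hh Hn) || rewrite (q_eq _ _ _ HN Hn)).

Lemma p_n N n : INR N = 2 * INR n -> half N = n -> 0 < INR n -> BL_p N n = 0.
Proof. intros HN Hh Hn. pq HN Hh Hn. unfold Rdiv. ring. Qed.
Lemma q_0 N n : INR N = 2 * INR n -> 0 < INR n -> BL_q N 0 = 0.
Proof. intros HN Hn. rewrite (q_eq _ _ _ HN Hn). simpl. unfold Rdiv. ring. Qed.

Lemma div_nonneg x y : 0 <= x -> 0 < y -> 0 <= x / y.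
Proof. intros. unfold Rdiv. apply Rmult_le_pos; auto. apply Rlt_le, Rinv_0_lt_compat; auto. Qed.

Lemma p_nonneg N n i : INR N = 2 * INR n -> half N = n -> 0 < INR n -> 0 <= BL_p N i.
Proof. intros HN Hh Hn. pq HN Hh Hn. apply div_nonneg. apply pow2_ge_0. nra. Qed.
Lemma q_nonneg N n i : INR N = 2 * INR n -> 0 < INR n -> 0 <= BL_q N i.
Proof. intros HN Hn. rewrite (q_eq _ _ _ HN Hn). apply div_nonneg. apply pow2_ge_0. nra. Qed.

Lemma ca_nonneg N n k : INR N = 2 * INR n -> 0 < INR n -> 0 <= ca N n k.
Proof. intros. unfold ca. destruct andb; [apply (q_nonneg N n)|]; auto; lra. Qed.
Lemma cc_nonneg N n k : INR N = 2 * INR n -> half N = n -> 0 < INR n -> 0 <= cc N n k.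
Proof. intros. unfold cc. destruct andb; [apply (p_nonneg N n)|]; auto; lra. Qed.

Lemma coef_H2 N n l : INR N = 2 * INR n -> half N = n -> 0 < INR n -> (1 <= l <= n)%nat ->
  ca N n (pred l) + cb N l + cc N n (S l) = 1 - 2 / INR n.
Proof.
  intros HN Hh Hn Hl.
  assert (E1 : ca N n (pred l) = BL_q N (pred l)).
  { unfold ca; bdestr; try reflexivity; try (exfalso; lia); replace (pred l) with 0%nat by lia; rewrite (q_0 N n); auto. }
  assert (E2 : cc N n (S l) = BL_p N l).
  { unfold cc; bdestr; try reflexivity; try (exfalso; lia); replace l with n by lia; rewrite (p_n N n); auto. }
  rewrite E1, E2. unfold cb. pq HN Hh Hn. rewrite INR_pred by lia. field. lra.
Qed.

Lemma le_div1_aux a b x d : 0 < d -> a + Rabs x + b <= d -> a * / d + Rabs x * / d + b * / d <= 1.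
Proof. intros Hd H. replace (a * / d + Rabs x * / d + b * / d) with ((a + Rabs x + b) * / d) by ring.
  rewrite <- (Rinv_r d) by lra. apply Rmult_le_compat_r; auto. apply Rlt_le, Rinv_0_lt_compat; auto. Qed.

Lemma coef_H4 N n l : INR N = 2 * INR n -> half N = n -> 0 < INR n -> (1 <= l <= n)%nat ->
  ca N n (pred l) + Rabs (cb N l) + cc N n (S l) <= 1.
Proof.
  intros HN Hh Hn Hl.
  assert (E1 : ca N n (pred l) = BL_q N (pred l)).
  { unfold ca; bdestr; try reflexivity; try (exfalso; lia); replace (pred l) with 0%nat by lia; rewrite (q_0 N n); auto. }
  assert (E2 : cc N n (S l) = BL_p N l).
  { unfold cc; bdestr; try reflexivity; try (exfalso; lia); replace l with n by lia; rewrite (p_n N n); auto. }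
  rewrite E1, E2. unfold cb. pq HN Hh Hn. rewrite INR_pred by lia.
  assert (L1 : 1 <= INR l) by (apply (le_INR 1); lia).
  assert (L2 : INR l <= INR n) by (apply le_INR; lia).
  set (L := INR l) in *. set (m := INR n) in *.
  assert (P : 0 < m ^ 2) by nra.
  set (X := m ^ 2 - L ^ 2 - (m - (L - 1)) ^ 2).
  assert (E3 : 1 - L ^ 2 / m ^ 2 - (m - (L - 1)) ^ 2 / m ^ 2 = X * / m ^ 2) by (unfold X; field; lra).
  rewrite E3, Rabs_mult, (Rabs_pos_eq (/ m ^ 2)) by (apply Rlt_le, Rinv_0_lt_compat; auto).
  unfold Rdiv.
  apply le_div1_aux; auto.
  unfold X, Rabs; destruct Rcase_abs; nra.
Qed.
Lemma bsum N n k : INR N = 2 * INR n -> half N = n -> 3 <= INR n -> (1 <= k)%nat -> (S k <= n)%nat ->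
  0 <= cb N (S k) + cb N k.
Proof.
  intros HN Hh H3 H1 H2. assert (Hn : 0 < INR n) by lra.
  assert (L1 : 1 <= INR k) by (apply (le_INR 1); lia).
  assert (L2 : INR k + 1 <= INR n) by (rewrite <- S_INR; apply le_INR; lia).
  assert (E : cb N (S k) + cb N k = (2 * INR n^2 - (INR k + 1) ^ 2 - (INR n - INR k) ^ 2 - INR k ^ 2 - (INR n - (INR k - 1)) ^ 2) / INR n ^ 2).
  { unfold cb. simpl pred. pq HN Hh Hn. rewrite INR_pred by lia. rewrite S_INR. field. lra. }
  rewrite E.
  set (K := INR k) in *. set (m := INR n) in *.
  apply div_nonneg; [|nra].
  assert (0 <= (K - 1) * (m - 1 - K)) by (apply Rmult_le_pos; lra). nra.
Qed.

Lemma coef_H5a N n k : INR N = 2 * INR n -> half N = n -> 3 <= INR n -> (1 <= k <= n)%nat ->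
  0 <= ca N n k * (cb N (S k) + cb N k).
Proof.
  intros HN Hh H3 Hk. unfold ca. bdestr; try lra.
  apply Rmult_le_pos. apply (q_nonneg N n); auto; lra. apply (bsum N n); auto; lia.
Qed.

Lemma coef_H5c N n k : INR N = 2 * INR n -> half N = n -> 3 <= INR n -> (1 <= k <= n)%nat ->
  0 <= cc N n k * (cb N k + cb N (pred k)).
Proof.
  intros HN Hh H3 Hk. unfold cc. bdestr; try lra.
  apply Rmult_le_pos. apply (p_nonneg N n); auto; lra.
  replace k with (S (pred k)) at 1 by lia. apply (bsum N n); auto; lia.
Qed.
Lemma C_pos a b : 0 < C a b.
Proof. unfold C. apply Rdiv_lt_0_compat. apply INR_fact_lt_0.
  apply Rmult_lt_0_compat; apply INR_fact_lt_0. Qed.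

Lemma C_ratio n i : (i < n)%nat -> C n (S i) * INR (S i) = C n i * INR (n - i).
Proof.
  intros H. unfold C.
  replace (n - i)%nat with (S (n - S i)) by lia.
  change (fact (S i)) with (S i * fact i)%nat.
  change (fact (S (n - S i))) with (S (n - S i) * fact (n - S i))%nat.
  rewrite !mult_INR.
  assert (A1 := INR_fact_lt_0 i). assert (A2 := INR_fact_lt_0 (n - S i)).
  assert (A3 : 0 < INR (S i)) by (apply lt_0_INR; lia).
  assert (A4 : 0 < INR (S (n - S i))) by (apply lt_0_INR; lia).
  field. repeat split; lra.
Qed.

Lemma pi_nonneg N i : 0 <= BL_pi N i.
Proof. unfold BL_pi. apply div_nonneg. apply pow2_ge_0. apply C_pos. Qed.

Lemma DB N n i : INR N = 2 * INR n -> half N = n -> 0 < INR n -> (i < n)%nat ->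
  BL_pi N (S i) * BL_q N (S i) = BL_pi N i * BL_p N i.
Proof.
  intros HN Hh Hn Hi. pq HN Hh Hn. unfold BL_pi. rewrite Hh.
  assert (E := C_ratio n i Hi). rewrite minus_INR in E by lia.
  assert (P := C_pos N n).
  replace (C n (S i) ^ 2 / C N n * (INR (S i) ^ 2 / INR n ^ 2)) with
    ((C n (S i) * INR (S i)) ^ 2 / (C N n * INR n ^ 2)) by (field; lra).
  rewrite E. field. lra.
Qed.

Lemma pi_sum N n : (N = n + n)%nat -> half N = n -> sum_f_R0 (BL_pi N) n = 1.
Proof.
  intros HN Hh. unfold BL_pi. rewrite Hh.
  transitivity (sum_f_R0 (fun i => C n i ^ 2) n * / C N n).
  { unfold Rdiv. rewrite (Rmult_comm (sum_f_R0 _ _)), scal_sum. apply sum_eq. intros; ring. }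
  rewrite vdm2, <- HN. field. assert (P := C_pos N n). lra.
Qed.

Lemma pi_step N n : INR N = 2 * INR n -> half N = n -> 0 < INR n ->
  IsStep n (BL_p N) (BL_q N) (BL_pi N) (BL_pi N).
Proof.
  intros HN Hh Hn i Hi.
  assert (E1 : (if (1 <=? i)%nat then BL_p N (pred i) * BL_pi N (pred i) else 0) = BL_q N i * BL_pi N i).
  { bdestr. rewrite Rmult_comm, <- DB with (n := n) by (auto; lia).
    replace (S (pred i)) with i by lia. ring. replace i with 0%nat by lia. rewrite (q_0 N n); auto. ring. }
  assert (E2 : (if (i <? n)%nat then BL_q N (S i) * BL_pi N (S i) else 0) = BL_p N i * BL_pi N i).
  { bdestr. rewrite Rmult_comm, DB with (n := n) by auto. ring.
    replace i with n by lia. rewrite (p_n N n); auto. ring. }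
  rewrite E1, E2. ring.
Qed.

Lemma rho_step N n j m : half N = n ->
  IsStep n (BL_p N) (BL_q N) (BL_rho N m j) (BL_rho N (S m) j).
Proof.
  intros Hh i Hi. simpl BL_rho. unfold BL_T. rewrite Hh.
  rewrite (sumT (BL_p N) (BL_q N) (BL_r N) (BL_rho N m j) i n).
  unfold BL_r. bdestr; try (exfalso; lia); simpl; ring.
Qed.
Lemma sum_delta j n : sum_f_R0 (fun i => if Nat.eqb i j then 1 else 0) n = if (j <=? n)%nat then 1 else 0.
Proof.
  induction n as [|n IH].
  - destruct j; simpl; lra.
  - rewrite tech5, IH. bdestr; try (exfalso; lia); lra.
Qed.

Definition xm N j m := fun i => BL_rho N m j i - BL_pi N i.
Definition hm N n j m := fun k => if inr1 n k then tail n (xm N j m) k else 0.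

Lemma TV_Phi N n j m : (1 <= n)%nat -> tail n (xm N j m) 0 = 0 -> half N = n ->
  BL_TV N m j <= Phi n (hm N n j m).
Proof.
  intros Hn1 Hm Hh. unfold BL_TV. rewrite Hh.
  set (G := tail n (xm N j m)).
  apply Rle_trans with (/ 2 * sum_f_R0 (fun i => Rabs (G i) + Rabs (G (S i))) n).
  { apply Rmult_le_compat_l; [lra|]. apply sum_Rle. intros i Hi.
    replace (BL_rho N m j i - BL_pi N i) with (G i - G (S i)).
    2:{ unfold G. rewrite (tail_S n _ i) by lia. unfold xm. ring. }
    unfold Rminus. eapply Rle_trans; [apply Rabs_triang|]. rewrite Rabs_Ropp. lra. }
  rewrite plus_sum, (sumf_S1S (fun i => Rabs (G i))), sumf_S1. simpl S1.
  assert (E0 : G 0%nat = 0) by exact Hm.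
  assert (E1 : G (S n) = 0) by (apply tail_out; lia).
  rewrite E0, E1, Rabs_R0.
  assert (E : S1 (fun i => Rabs (G i)) n = Phi n (hm N n j m)).
  { unfold Phi, hm. apply S1_ext. intros k Hk. unfold inr1. bdestr; try lia. reflexivity. }
  rewrite E. lra.
Qed.

Lemma pow_exp x m : exp x ^ m = exp (INR m * x).
Proof.
  induction m. simpl. rewrite Rmult_0_l, exp_0. reflexivity.
  simpl pow. rewrite IHm, S_INR, <- exp_plus. f_equal. ring.
Qed.
Lemma TV_bound N n j : (N = n + n)%nat -> half N = n -> (3 <= n)%nat -> (j <= n)%nat ->
  forall m, BL_TV N m j <= 3 * INR n * (1 - 2 / INR n) ^ m.
Proof.
  intros HNn Hh H3n Hj.
  assert (HN : INR N = 2 * INR n) by (rewrite HNn, plus_INR; ring).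
  assert (H3 : 3 <= INR n) by (apply (le_INR 3) in H3n; simpl in H3n; lra).
  assert (Hn : 0 < INR n) by lra.
  assert (Hstep : forall m, IsStep n (BL_p N) (BL_q N) (xm N j m) (xm N j (S m))).
  { intros m. unfold xm. apply IsStep_minus. apply rho_step; auto. apply pi_step; auto. }
  assert (Hpn := p_n N n HN Hh Hn). assert (Hq0 := q_0 N n HN Hn).
  assert (Hmass : forall m, tail n (xm N j m) 0 = 0).
  { induction m.
    - unfold xm. rewrite tail_minus, !tail0. simpl BL_rho. rewrite sum_delta.
      rewrite (pi_sum N n) by auto. bdestr; try lia. ring.
    - rewrite (tail_rec0 n (BL_p N) (BL_q N) (xm N j m)); auto. lia. }
  set (a := ca N n). set (b := cb N). set (c := cc N n).
  assert (HL : forall m k, hm N n j (S m) k = Lop n a b c (hm N n j m) k).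
  { intros m k. unfold Lop, hm. destruct (inr1 n k) eqn:E; [|reflexivity].
    unfold inr1 in E. apply andb_prop in E. destruct E as [E1 E2].
    apply Nat.leb_le in E1. apply Nat.leb_le in E2.
    rewrite (tail_rec n (BL_p N) (BL_q N) (xm N j m) (xm N j (S m))) by auto.
    assert (A1 : a k * (if inr1 n (S k) then tail n (xm N j m) (S k) else 0) = BL_q N k * tail n (xm N j m) (S k)).
    { unfold a, ca, inr1. bdestr; try (exfalso; lia); try ring.
      replace k with n by lia. rewrite (tail_out n _ (S n)) by lia. ring. }
    assert (A2 : c k * (if inr1 n (pred k) then tail n (xm N j m) (pred k) else 0) = BL_p N (pred k) * tail n (xm N j m) (pred k)).
    { unfold c, cc, inr1. bdestr; try (exfalso; lia); try ring.
      replace (pred k) with 0%nat by lia. rewrite Hmass. ring. }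
    assert (A3 : (if inr1 n k then tail n (xm N j m) k else 0) = tail n (xm N j m) k).
    { unfold inr1. bdestr; try lia. reflexivity. }
    rewrite A1, A2. unfold b, cb. ring. }
  assert (Hb0 : forall m, hm N n j m 0%nat = 0) by reflexivity.
  assert (Hb1 : forall m, hm N n j m (S n) = 0).
  { intros m. unfold hm, inr1. bdestr; try lia; reflexivity. }
  assert (Ha0 : a 0%nat = 0) by reflexivity.
  assert (HcS : c (S n) = 0) by (unfold c, cc; bdestr; try lia; reflexivity).
  assert (Han : a n = 0) by (unfold a, ca; bdestr; try lia; reflexivity).
  assert (Hc1 : c 1%nat = 0) by reflexivity.
  assert (Hap : forall k, 0 <= a k) by (intros; apply (ca_nonneg N n); auto).
  assert (Hcp : forall k, 0 <= c k) by (intros; apply (cc_nonneg N n); auto).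
  set (g := 1 - 2 / INR n).
  assert (H2 : forall l, (1 <= l <= n)%nat -> a (pred l) + b l + c (S l) = g).
  { intros; apply coef_H2; auto. }
  assert (H4 : forall l, (1 <= l <= n)%nat -> a (pred l) + Rabs (b l) + c (S l) <= 1).
  { intros; apply coef_H4; auto. }
  assert (H5a : forall k, (1 <= k <= n)%nat -> 0 <= a k * (b (S k) + b k)).
  { intros; apply coef_H5a; auto. }
  assert (H5c : forall k, (1 <= k <= n)%nat -> 0 <= c k * (b k + b (pred k))).
  { intros; apply coef_H5c; auto. }
  assert (Hg : 1/3 <= g).
  { unfold g. assert (2 / INR n <= 2 / 3). { unfold Rdiv. apply Rmult_le_compat_l. lra.
      apply Rinv_le_contravar; lra. } lra. }
  assert (Phi1 : forall m, Phi n (hm N n j (S m)) <= Phi n (hm N n j m)).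
  { intros m. unfold Phi at 1. rewrite (S1_ext _ (fun k => Rabs (Lop n a b c (hm N n j m) k))) by (intros; rewrite HL; reflexivity).
    apply (Lop_one n a b c); auto. }
  assert (Phi2 : forall m, Phi n (hm N n j (S (S m))) <= g * g * Phi n (hm N n j m)).
  { intros m. unfold Phi at 1.
    rewrite (S1_ext _ (fun k => Rabs (Lop n a b c (Lop n a b c (hm N n j m)) k))).
    2:{ intros k Hk. rewrite HL. rewrite (Lop_ext n a b c _ _ (HL m)). reflexivity. }
    apply (Lop_two n a b c g); auto. }
  assert (Phi0 : Phi n (hm N n j 0) <= INR n).
  { unfold Phi. rewrite <- (Rmult_1_l (INR n)), <- S1_const. apply S1_le. intros k Hk.
    unfold hm, inr1. bdestr; try lia. unfold xm. rewrite tail_minus.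
    assert (D1 : 0 <= tail n (BL_rho N 0 j) k) by (apply tl_nonneg; intros; simpl; bdestr; lra).
    assert (D2 : tail n (BL_rho N 0 j) k <= 1).
    { rewrite (tail_le0 n). rewrite tail0. simpl BL_rho. rewrite sum_delta. bdestr; try lia; lra.
      intros; simpl; bdestr; lra. }
    assert (D3 : 0 <= tail n (BL_pi N) k) by (apply tl_nonneg; intros; apply pi_nonneg).
    assert (D4 : tail n (BL_pi N) k <= 1).
    { rewrite (tail_le0 n). rewrite tail0. rewrite (pi_sum N n) by auto. lra.
      intros; apply pi_nonneg. }
    apply Rabs_le. lra. }
  assert (Hgg : 0 <= g) by lra.
  assert (Ev : forall t, Phi n (hm N n j (2 * t)) <= g ^ (2 * t) * INR n /\
                         Phi n (hm N n j (S (2 * t))) <= g ^ (2 * t) * INR n).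
  { induction t.
    - simpl. split; [lra|]. eapply Rle_trans; [apply Phi1|]. lra.
    - replace (2 * S t)%nat with (S (S (2 * t))) by lia.
      destruct IHt as [I1 I2]. change (g ^ S (S (2 * t))) with (g * (g * g ^ (2 * t))). split.
      + eapply Rle_trans; [apply Phi2|]. replace (g * (g * g ^ (2 * t)) * INR n) with (g * g * (g ^ (2 * t) * INR n)) by ring.
        apply Rmult_le_compat_l; auto. apply Rmult_le_pos; auto.
      + eapply Rle_trans; [apply Phi2|]. replace (g * (g * g ^ (2 * t)) * INR n) with (g * g * (g ^ (2 * t) * INR n)) by ring.
        apply Rmult_le_compat_l; auto. apply Rmult_le_pos; auto. }
  intros m. eapply Rle_trans. apply (TV_Phi N n j m); auto; lia.
  assert (Gt : 0 <= g ^ m) by (apply pow_le; auto).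
  destruct (Nat.Even_or_Odd m) as [[t Ht]|[t Ht]]; subst m.
  - destruct (Ev t) as [I1 _]. assert (0 <= g ^ (2 * t) * INR n) by (apply Rmult_le_pos; lra). lra.
  - replace (2 * t + 1)%nat with (S (2 * t)) by lia. destruct (Ev t) as [_ I2].
    eapply Rle_trans; [apply I2|]. change (g ^ S (2 * t)) with (g * g ^ (2 * t)).
    assert (0 <= g ^ (2 * t) * INR n) by (apply Rmult_le_pos; [apply pow_le|]; lra).
    replace (3 * INR n * (g * g ^ (2 * t))) with ((3 * g) * (g ^ (2 * t) * INR n)) by ring.
    rewrite <- (Rmult_1_l (g ^ (2 * t) * INR n)) at 1.
    apply Rmult_le_compat_r; lra.
Qed.
Lemma exp_mono x y : x <= y -> exp x <= exp y.
Proof. intros H. destruct (Rle_lt_or_eq_dec _ _ H). apply Rlt_le, exp_increasing; auto. subst; lra. Qed.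

Theorem theorem5p1 :
  exists A : R, 0 < A /\
    forall (N : nat), (6 <= N)%nat -> Nat.Even N ->
    forall (c : R), 0 < c ->
    forall (m : nat),
      INR m >= / 4 * INR N * ln (INR N) + (c / 2 - ln 2 / 8) * INR N ->
      BL_avgTV N m <= A * exp (- (2 * c)).
Proof.
  exists 3. split; [lra|]. intros N H6 [n HNn] c Hc m Hm.
  assert (HNn' : N = (n + n)%nat) by lia.
  assert (Hh : half N = n).
  { unfold half. rewrite HNn, Nat.mul_comm. apply Nat.div_mul. lia. }
  assert (H3n : (3 <= n)%nat) by lia.
  assert (HN : INR N = 2 * INR n) by (rewrite HNn', plus_INR; ring).
  assert (H3 : 3 <= INR n) by (apply (le_INR 3) in H3n; simpl in H3n; lra).
  set (g := 1 - 2 / INR n).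
  assert (Hg : 0 <= g).
  { unfold g. assert (2 / INR n <= 2 / 3). { unfold Rdiv. apply Rmult_le_compat_l. lra.
      apply Rinv_le_contravar; lra. } lra. }
  apply Rle_trans with (3 * INR n * g ^ m).
  { unfold BL_avgTV. rewrite Hh.
    apply Rle_trans with (sum_f_R0 (fun j => BL_pi N j * (3 * INR n * g ^ m)) n).
    { apply sum_Rle. intros j Hj. apply Rmult_le_compat_l. apply pi_nonneg.
      apply TV_bound; auto. }
    rewrite <- scal_sum, (pi_sum N n) by auto. lra. }
  assert (E1 : g ^ m <= exp (INR m * (- 2 / INR n))).
  { rewrite <- pow_exp. apply pow_incr. split; auto.
    unfold g. replace (1 - 2 / INR n) with (1 + (- 2 / INR n)) by (field; lra). apply exp_ineq1_le. }
  assert (Hln2 : 0 < ln 2) by (rewrite <- ln_1; apply ln_increasing; lra).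
  assert (E2 : INR m * (- 2 / INR n) <= - ln (INR N) - 2 * c + ln 2 / 2).
  { set (X := ln (INR N)) in *. rewrite HN in Hm.
    replace (INR m * (- 2 / INR n)) with (- (2 * INR m) / INR n) by (field; lra).
    unfold Rdiv. apply Rle_trans with (((- X - 2 * c + ln 2 / 2) * INR n) * / INR n).
    - apply Rmult_le_compat_r. apply Rlt_le, Rinv_0_lt_compat; lra. lra.
    - right. field. lra. }
  assert (E3 : exp (- ln (INR N) - 2 * c + ln 2 / 2) = exp (- (2 * c)) * exp (ln 2 / 2) / INR N).
  { replace (- ln (INR N) - 2 * c + ln 2 / 2) with (- (2 * c) + ln 2 / 2 + - ln (INR N)) by ring.
    rewrite !exp_plus, (exp_Ropp (ln (INR N))), exp_ln by lra. field. lra. }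
  assert (E4 : exp (ln 2 / 2) <= 2).
  { apply Rle_trans with (exp (ln 2)). apply exp_mono; lra. rewrite exp_ln; lra. }
  assert (E5 := exp_mono _ _ E2). rewrite E3 in E5.
  assert (P : 0 < exp (- (2 * c))) by apply exp_pos.
  assert (P2 : 0 < exp (ln 2 / 2)) by apply exp_pos.
  apply Rle_trans with (3 * INR n * (exp (- (2 * c)) * exp (ln 2 / 2) / INR N)).
  { apply Rmult_le_compat_l. lra. lra. }
  rewrite HN.
  assert (Eq : 3 * INR n * (exp (- (2 * c)) * exp (ln 2 / 2) / (2 * INR n)) = 3 * exp (- (2 * c)) * (exp (ln 2 / 2) / 2)) by (field; lra).
  rewrite Eq.
  apply Rle_trans with (3 * exp (- (2 * c)) * 1).
  apply Rmult_le_compat_l; lra. lra.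
Qed.
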